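(* Let $\Lambda>0$, $e\ge\Lambda$, $\phi_h>0$, $f:[0,\phi_h]\to(0,1]$ strictly concave, strictly decreasing, differentiable with $f(0)=1$. Consider the two-player game with action sets $[0,\phi_h]$ and payoffs $\tilde{\mathcal M}_i(\phi_i,\phi_{-i})=0$ if $\phi_i>\phi_{-i}$, $=\frac{\Lambda}{2}f(\phi_i)\phi_i$ if $\phi_i=\phi_{-i}$, and $=\min\{\Lambda f(\phi_i),e\}\phi_i$ if $\phi_i<\phi_{-i}$. Let $\epsilon>0$ and suppose $0<\delta\le\phi_h$ satisfies $\sup_{\phi\le\delta}\Lambda f(\phi)\phi<\epsilon$. Then $(\delta,\delta)$ is an $\epsilon$-Nash equilibrium.
   Context: These payoffs are the limiting (driver abandonment rate $\beta\to0$) long-run revenue rates of two symmetric ride-hailing platforms using static prices, when passengers (total Poisson rate $\Lambda$) split across platforms by a Wardrop equilibrium equalizing the probability of not obtaining a ride, in the regime $e\ge\Lambda$ where $e$ is the effective driver arrival rate per platform; $f(\phi)$ is the probability a passenger accepts price $\phi$. A profile $(\phi_1,\phi_2)$ is an $\epsilon$-Nash equilibrium if for each player $i$ and each $\phi_i'\in[0,\phi_h]$, $\tilde{\mathcal M}_i(\phi_i',\phi_{-i})\le\tilde{\mathcal M}_i(\phi_i,\phi_{-i})+\epsilon$. *)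

(* Defs.v *)
From Stdlib Require Import Reals Lra.
Open Scope R_scope.

Definition strictly_concave_on (f : R -> R) (a b : R) : Prop :=
  forall x y t, a <= x <= b -> a <= y <= b -> x <> y -> 0 < t < 1 ->
    t * f x + (1 - t) * f y < f (t * x + (1 - t) * y).

Definition strictly_decreasing_on (f : R -> R) (a b : R) : Prop :=
  forall x y, a <= x <= b -> a <= y <= b -> x < y -> f y < f x.

Definition differentiable_on (f : R -> R) (a b : R) : Prop :=
  forall x, a <= x <= b -> exists l,
    limit1_in (fun y => (f y - f x) / (y - x))
              (fun y => a <= y <= b /\ y <> x) l x.

Definition payoff (Lam e : R) (f : R -> R) (phi_i phi_o : R) : R :=
  if Rlt_dec phi_o phi_i then 0
  else if Req_EM_T phi_i phi_o then Lam / 2 * f phi_i * phi_i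
  else Rmin (Lam * f phi_i) e * phi_i.

Definition eps_Nash (Lam e phih : R) (f : R -> R) (eps p1 p2 : R) : Prop :=
  (forall p', 0 <= p' <= phih ->
     payoff Lam e f p' p2 <= payoff Lam e f p1 p2 + eps) /\
  (forall p', 0 <= p' <= phih ->
     payoff Lam e f p' p1 <= payoff Lam e f p2 p1 + eps).

(* Main.v *)
Require Import Defs.
From Stdlib Require Import Reals Lra.
Open Scope R_scope.

Lemma side (Lam e phih : R) (f : R -> R) (eps delta s : R) :
  0 < Lam -> (forall x, 0 <= x <= phih -> 0 < f x <= 1) ->
  0 < delta <= phih ->
  is_lub (fun v => exists phi, 0 <= phi <= delta /\ v = Lam * f phi * phi) s ->
  s < eps -> 0 < eps ->
  forall p', 0 <= p' <= phih ->
     payoff Lam e f p' delta <= payoff Lam e f delta delta + eps.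
Proof.
  intros HL Hf Hd [Hub _] Hs He p' Hp.
  assert (Hfd := Hf delta ltac:(lra)).
  assert (H0 : 0 <= Lam / 2 * f delta * delta).
  { apply Rmult_le_pos; [apply Rmult_le_pos|]; lra. }
  unfold payoff.
  destruct (Rlt_dec delta delta); [lra|].
  destruct (Req_EM_T delta delta); [|congruence].
  destruct (Rlt_dec delta p'); [lra|].
  destruct (Req_EM_T p' delta); [subst; lra|].
  assert (Hb : Lam * f p' * p' <= s).
  { apply Hub. exists p'. split; [apply Rnot_lt_le in n0; lra|reflexivity]. }
  assert (Rmin (Lam * f p') e * p' <= Lam * f p' * p').
  { apply Rmult_le_compat_r; [lra|apply Rmin_l]. }
  lra.
Qed.

Theorem theorem6 (Lam e phih : R) (f : R -> R) (eps delta : R) :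
  0 < Lam -> Lam <= e -> 0 < phih ->
  (forall x, 0 <= x <= phih -> 0 < f x <= 1) ->
  strictly_concave_on f 0 phih ->
  strictly_decreasing_on f 0 phih ->
  differentiable_on f 0 phih ->
  f 0 = 1 ->
  0 < eps ->
  0 < delta <= phih ->
  (exists s, is_lub (fun v => exists phi, 0 <= phi <= delta /\ v = Lam * f phi * phi) s
             /\ s < eps) ->
  eps_Nash Lam e phih f eps delta delta.
Proof.
  intros HL _ _ Hf _ _ _ _ He Hd [s [Hs Hse]].
  split; eapply side; eauto.
Qed.
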